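(* There is an absolute constant $c_0>0$ such that the following holds. Let $n\ge 2$, $\mathcal F\subseteq S_n$ with $|\mathcal F|=c\,n!$, $0<c<1$, $\eta=\min\{c,1-c\}$, $f=2\chi_{\mathcal F}-1$, $f_1$ its projection onto $U_1$, and $\epsilon=\mathbb E[(f-f_1)^2]$ with $0<\epsilon\le c_0\eta^7$. If $(X,Y)$ is a typical restriction, then either $g_1$ is $(3\epsilon^{1/7},19\epsilon^{1/7})$-almost close to $c-\tfrac12$ and $g_2+c-\tfrac12$ is $(4\epsilon^{1/7},24\epsilon^{1/7})$-almost Boolean, or the same holds with the roles of $g_1$ and $g_2$ interchanged (all on $T_{X,Y}$ with the uniform measure).
   Context: $S_n$ is the symmetric group on $[n]$; $T_{ij}$ is the indicator of $\{\pi:\pi(i)=j\}$; $U_1=\mathrm{span}\{T_{ij}\}$ with inner product $\langle f,g\rangle=\frac1{n!}\sum_\pi f(\pi)g(\pi)$. Let $a_{ij}=(n-1)\langle f,T_{ij}\rangle-\frac{n-2}{n}(2c-1)$. A restriction is $(X,Y)$ with $X,Y\subseteq[n]$, $|X|=|Y|$; $T_{X,Y}=\{\pi:\pi(X)=Y\}$ with uniform measure. For $\pi\in T_{X,Y}$, $g_1(\pi)=\sum_{i\in X}a_{i\pi(i)}$, $g_2(\pi)=\sum_{i\notin X}a_{i\pi(i)}$, $g=g_1+g_2$. A function $\phi$ is $(\delta,\epsilon)$-almost Boolean if $\Pr[||\phi|-1|\le\epsilon]\ge1-\delta$, and $(\delta,\epsilon)$-almost close to $C$ if $\Pr[|\phi-C|\le\epsilon]\ge1-\delta$.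 A restriction is typical if: (a) $g$ is $(\epsilon^{4/7},\epsilon^{1/7})$-almost Boolean; (b) $\mathbb E[g_1],\mathbb E[g_2]$ are within $\epsilon^{1/7}$ of $c-\frac12$; (c) $\mathbb E[(|g|-1)^2]\le\epsilon^{6/7}$. *)

(* Defs.v *)
From mathcomp Require Import all_boot all_fingroup.
From Stdlib Require Import Reals.

Set Implicit Arguments.
Unset Strict Implicit.
Unset Printing Implicit Defensive.

Local Open Scope R_scope.

Definition rsum (T : finType) (P : pred T) (F : T -> R) : R :=
  \big[Rplus/0]_(x | P x) F x.

Definition Sn (n : nat) := {perm 'I_n}.

Definition Rleb (x y : R) : bool := if Rle_dec x y then true else false.

Definition inner (n : nat) (f g : Sn n -> R) : R :=
  / INR (n`!) * rsum predT (fun pi => f pi * g pi).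

Definition ESn (n : nat) (f : Sn n -> R) : R := inner f (fun _ => 1).

Definition Tij (n : nat) (i j : 'I_n) (pi : Sn n) : R :=
  if pi i == j then 1 else 0.

Definition inU1 (n : nat) (h : Sn n -> R) : Prop :=
  exists b : 'I_n -> 'I_n -> R,
    forall pi, h pi = rsum predT (fun i => rsum predT (fun j => b i j * Tij i j pi)).

Definition is_proj_U1 (n : nat) (f h : Sn n -> R) : Prop :=
  inU1 h /\ forall i j : 'I_n, inner (fun pi => f pi - h pi) (Tij i j) = 0.

Definition dens (n : nat) (F : {set Sn n}) : R := INR #|F| / INR (n`!).

Definition fF (n : nat) (F : {set Sn n}) (pi : Sn n) : R :=
  2 * (if pi \in F then 1 else 0) - 1.

Definition acoef (n : nat) (F : {set Sn n}) (i j : 'I_n) : R :=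
  (INR n - 1) * inner (fF F) (Tij i j) - (INR n - 2) / INR n * (2 * dens F - 1).

Definition TXY (n : nat) (X Y : {set 'I_n}) : {set Sn n} :=
  [set pi : Sn n | (fun x : 'I_n => (pi : Sn n) x) @: X == Y].

Definition g1 (n : nat) (F : {set Sn n}) (X : {set 'I_n}) (pi : Sn n) : R :=
  rsum (fun i => i \in X) (fun i => acoef F i (pi i)).
Definition g2 (n : nat) (F : {set Sn n}) (X : {set 'I_n}) (pi : Sn n) : R :=
  rsum (fun i => i \notin X) (fun i => acoef F i (pi i)).
Definition gg (n : nat) (F : {set Sn n}) (X : {set 'I_n}) (pi : Sn n) : R :=
  g1 F X pi + g2 F X pi.

Definition PrT (n : nat) (X Y : {set 'I_n}) (P : pred (Sn n)) : R :=
  INR #|[set pi in TXY X Y | P pi]| / INR #|TXY X Y|.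
Definition ET (n : nat) (X Y : {set 'I_n}) (phi : Sn n -> R) : R :=
  rsum (fun pi => pi \in TXY X Y) phi / INR #|TXY X Y|.

Definition almost_boolean (n : nat) (X Y : {set 'I_n}) (phi : Sn n -> R)
  (delta eps : R) : Prop :=
  PrT X Y (fun pi => Rleb (Rabs (Rabs (phi pi) - 1)) eps) >= 1 - delta.

Definition almost_close (n : nat) (X Y : {set 'I_n}) (phi : Sn n -> R)
  (C delta eps : R) : Prop :=
  PrT X Y (fun pi => Rleb (Rabs (phi pi - C)) eps) >= 1 - delta.

Definition typical (n : nat) (F : {set Sn n}) (eps : R) (X Y : {set 'I_n}) : Prop :=
  #|X| = #|Y| /\
  almost_boolean X Y (gg F X) (Rpower eps (4/7)) (Rpower eps (1/7)) /\
  Rabs (ET X Y (g1 F X) - (dens F - 1/2)) <= Rpower eps (1/7) /\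
  Rabs (ET X Y (g2 F X) - (dens F - 1/2)) <= Rpower eps (1/7) /\
  ET X Y (fun pi => (Rabs (gg F X pi) - 1) ^ 2) <= Rpower eps (6/7).

(* Main.v *)
From HB Require Import structures.
Require Import Defs.
From mathcomp Require Import all_boot all_fingroup.
From Stdlib Require Import Reals Lra Psatz.
Set Implicit Arguments.
Unset Strict Implicit.
Local Open Scope R_scope.
Lemma Rplus_assoc' : associative Rplus. Proof. by move=> a b c; rewrite Rplus_assoc. Qed.
HB.instance Definition _ := Monoid.isComLaw.Build R 0 Rplus Rplus_assoc' Rplus_comm Rplus_0_l.

Lemma rsum_le (U : finType) (P : pred U) (F G : U -> R) :
  (forall x, P x -> F x <= G x) -> rsum P F <= rsum P G.
Proof.
move=> H; rewrite /rsum; apply: (big_ind2 (fun a b => a <= b)) => //.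
- exact: Rle_refl.
- by move=> a b c d ? ?; apply: Rplus_le_compat.
Qed.

Lemma rsum0 (U : finType) (P : pred U) : rsum P (fun _ => 0) = 0.
Proof. by rewrite /rsum big1. Qed.

Lemma rsum_ge0 (U : finType) (P : pred U) (F : U -> R) :
  (forall x, P x -> 0 <= F x) -> 0 <= rsum P F.
Proof. by move=> H; rewrite -(rsum0 P); apply: rsum_le. Qed.

Lemma rsumD (U : finType) (P : pred U) (F G : U -> R) :
  rsum P (fun x => F x + G x) = rsum P F + rsum P G.
Proof. by rewrite /rsum big_split. Qed.

Lemma rsumZ (U : finType) (P : pred U) (c : R) (F : U -> R) :
  rsum P (fun x => c * F x) = c * rsum P F.
Proof.
rewrite /rsum; apply: (big_ind2 (fun a b => a = c * b)) => //.
- by rewrite Rmult_0_r.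
- by move=> a b x y -> ->; rewrite Rmult_plus_distr_l.
Qed.

Lemma rsumZr (U : finType) (P : pred U) (c : R) (F : U -> R) :
  rsum P (fun x => F x * c) = rsum P F * c.
Proof.
rewrite Rmult_comm -rsumZ; rewrite /rsum; apply: eq_bigr => x _; exact: Rmult_comm.
Qed.

Lemma rsum_ext (U : finType) (P : pred U) (F G : U -> R) :
  (forall x, P x -> F x = G x) -> rsum P F = rsum P G.
Proof. by move=> H; rewrite /rsum; apply: eq_bigr. Qed.

Lemma rsum_exch (U V : finType) (P : pred U) (Q : pred V) (F : U -> V -> R) :
  rsum P (fun x => rsum Q (fun y => F x y)) = rsum Q (fun y => rsum P (fun x => F x y)).
Proof. by rewrite /rsum exchange_big. Qed.

Lemma rsum_card (U : finType) (A : {set U}) :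
  rsum (fun x => x \in A) (fun _ => 1) = INR #|A|.
Proof.
rewrite -sum1_card /rsum (big_morph INR plus_INR (erefl (INR 0))) //.
Qed.

Lemma rsum_const (U : finType) (A : {set U}) c :
  rsum (fun x => x \in A) (fun _ => c) = INR #|A| * c.
Proof. by rewrite -rsum_card -rsumZr; apply: rsum_ext => x _; ring. Qed.

Lemma rsum_cnt (U : finType) (A : {set U}) (P : pred U) :
  INR #|[set x in A | P x]| = rsum (fun x => x \in A) (fun x => if P x then 1 else 0).
Proof.
rewrite -rsum_card /rsum -big_mkcondr; apply: eq_bigl => x; by rewrite !inE.
Qed.

Lemma RlebP x y : Rleb x y = true <-> x <= y.
Proof. rewrite /Rleb; case: Rle_dec => //. Qed.

Lemma T_in n (X Y : {set 'I_n}) (p : Sn n) x :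
  p \in TXY X Y -> x \in X -> p x \in Y.
Proof. by rewrite inE => /eqP <- Hx; apply: imset_f. Qed.

Lemma T_out n (X Y : {set 'I_n}) (p : Sn n) x :
  p \in TXY X Y -> x \notin X -> p x \notin Y.
Proof.
move=> Hp Hx; apply/negP; move: Hp; rewrite inE => /eqP <- /imsetP [y Hy].
by move/perm_inj => E; move: Hx; rewrite E Hy.
Qed.

Definition mixf n (X : {set 'I_n}) (p s : Sn n) (x : 'I_n) : 'I_n :=
  if x \in X then p x else s x.

Definition mix n (X : {set 'I_n}) (p s : Sn n) : Sn n :=
  match injectiveP (mixf X p s) with
  | ReflectT H => perm H
  | ReflectF _ => p
  end.

Lemma mixf_inj n (X Y : {set 'I_n}) (p s : Sn n) :
  p \in TXY X Y -> s \in TXY X Y -> injective (mixf X p s).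
Proof.
move=> Hp Hs x y; rewrite /mixf.
case: (boolP (x \in X)) => Hx; case: (boolP (y \in X)) => Hy.
- exact: perm_inj.
- move=> E; have := T_out Hs Hy; by rewrite -E (T_in Hp Hx).
- move=> E; have := T_out Hs Hx; by rewrite E (T_in Hp Hy).
- exact: perm_inj.
Qed.

Lemma mixE n (X Y : {set 'I_n}) (p s : Sn n) x :
  p \in TXY X Y -> s \in TXY X Y -> mix X p s x = mixf X p s x.
Proof.
move=> Hp Hs; rewrite /mix; case: injectiveP => [H|H]; first by rewrite permE.
by case: H; exact: mixf_inj Hp Hs.
Qed.

Lemma mix_in n (X Y : {set 'I_n}) (p s : Sn n) :
  p \in TXY X Y -> s \in TXY X Y -> mix X p s \in TXY X Y.
Proof.
move=> Hp Hs; rewrite inE; move: (Hp); rewrite inE => /eqP E.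
rewrite -E; apply/eqP; apply: eq_in_imset => x Hx.
by rewrite (mixE _ Hp Hs) /mixf Hx.
Qed.

Lemma g1_mix n (F : {set Sn n}) (X Y : {set 'I_n}) (p s : Sn n) :
  p \in TXY X Y -> s \in TXY X Y -> g1 F X (mix X p s) = g1 F X p.
Proof.
move=> Hp Hs; rewrite /g1; apply: rsum_ext => x Hx.
by rewrite (mixE _ Hp Hs) /mixf Hx.
Qed.

Lemma g2_mix n (F : {set Sn n}) (X Y : {set 'I_n}) (p s : Sn n) :
  p \in TXY X Y -> s \in TXY X Y -> g2 F X (mix X p s) = g2 F X s.
Proof.
move=> Hp Hs; rewrite /g2; apply: rsum_ext => x Hx.
by rewrite (mixE _ Hp Hs) /mixf (negbTE Hx).
Qed.

Lemma mix_inv n (X Y : {set 'I_n}) (p s : Sn n) :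
  p \in TXY X Y -> s \in TXY X Y -> mix X (mix X p s) (mix X s p) = p.
Proof.
move=> Hp Hs; apply/permP => x.
rewrite (mixE _ (mix_in Hp Hs) (mix_in Hs Hp)) /mixf.
case: (boolP (x \in X)) => Hx.
- by rewrite (mixE _ Hp Hs) /mixf Hx.
- by rewrite (mixE _ Hs Hp) /mixf (negbTE Hx).
Qed.

Definition Phi n (X Y : {set 'I_n}) (q : Sn n * Sn n) : Sn n * Sn n :=
  if (q.1 \in TXY X Y) && (q.2 \in TXY X Y) then (mix X q.1 q.2, mix X q.2 q.1) else q.

Lemma Phi_in n (X Y : {set 'I_n}) q :
  ((Phi X Y q).1 \in TXY X Y) && ((Phi X Y q).2 \in TXY X Y) =
  (q.1 \in TXY X Y) && (q.2 \in TXY X Y).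
Proof.
rewrite /Phi; case: q => p s /=.
case Hp: (p \in TXY X Y); case Hs: (s \in TXY X Y) => //=; rewrite ?Hp ?Hs //.
by rewrite (mix_in Hp Hs) (mix_in Hs Hp).
Qed.

Lemma Phi_invol n (X Y : {set 'I_n}) : involutive (Phi X Y).
Proof.
move=> [p s]; rewrite /Phi /=.
case Hp: (p \in TXY X Y); case Hs: (s \in TXY X Y) => //=; rewrite ?Hp ?Hs //.
by rewrite (mix_in Hp Hs) (mix_in Hs Hp) /= (mix_inv Hp Hs) (mix_inv Hs Hp).
Qed.

Lemma sum_mix n (X Y : {set 'I_n}) (H : Sn n -> Sn n -> R) :
  rsum (fun p => p \in TXY X Y) (fun p => rsum (fun s => s \in TXY X Y)
        (fun s => H (mix X p s) (mix X s p))) =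
  rsum (fun p => p \in TXY X Y) (fun p => rsum (fun s => s \in TXY X Y) (fun s => H p s)).
Proof.
rewrite /rsum !pair_big.
rewrite (reindex_inj (inv_inj (Phi_invol X Y))) /=.
apply: eq_big => q; first by rewrite Phi_in.
rewrite Phi_in => Hq; rewrite /Phi Hq /=.
by case/andP: Hq => Hp Hs; rewrite (mix_inv Hp Hs) (mix_inv Hs Hp).
Qed.

Lemma sum_indep n (F : {set Sn n}) (X Y : {set 'I_n}) (Psi : R -> R -> R) :
  rsum (fun p => p \in TXY X Y) (fun p => rsum (fun s => s \in TXY X Y)
        (fun s => Psi (g1 F X p) (g2 F X s))) =
  INR #|TXY X Y| * rsum (fun p => p \in TXY X Y) (fun p => Psi (g1 F X p) (g2 F X p)).
Proof.
transitivity (rsum (fun p => p \in TXY X Y) (fun p => rsum (fun s => s \in TXY X Y)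
        (fun s => (fun a b => Psi (g1 F X a) (g2 F X a)) (mix X p s) (mix X s p)))).
  apply: rsum_ext => p Hp; apply: rsum_ext => s Hs /=.
  by rewrite (g1_mix _ Hp Hs) (g2_mix _ Hp Hs).
rewrite (sum_mix X Y (fun a b => Psi (g1 F X a) (g2 F X a))) -rsumZ; apply: rsum_ext => p Hp; rewrite rsum_const; ring.
Qed.

Lemma sum_cross n (F : {set Sn n}) (X Y : {set 'I_n}) (r : R -> R) :
  rsum (fun p => p \in TXY X Y) (fun p => rsum (fun s => s \in TXY X Y)
        (fun s => r (g1 F X p + g2 F X s) * r (g1 F X s + g2 F X p))) =
  rsum (fun p => p \in TXY X Y) (fun p => r (g1 F X p + g2 F X p)) *
  rsum (fun p => p \in TXY X Y) (fun p => r (g1 F X p + g2 F X p)).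
Proof.
transitivity (rsum (fun p => p \in TXY X Y) (fun p => rsum (fun s => s \in TXY X Y)
        (fun s => (fun a b => r (g1 F X a + g2 F X a) * r (g1 F X b + g2 F X b))
                  (mix X p s) (mix X s p)))).
  apply: rsum_ext => p Hp; apply: rsum_ext => s Hs /=.
  by rewrite (g1_mix _ Hp Hs) (g2_mix _ Hp Hs) (g1_mix _ Hs Hp) (g2_mix _ Hs Hp).
rewrite (sum_mix X Y (fun a b => r (g1 F X a + g2 F X a) * r (g1 F X b + g2 F X b))) -rsumZr; apply: rsum_ext => p Hp; by rewrite rsumZ.
Qed.

Lemma sgn_dec z : exists s w, (s = 1 \/ s = -1) /\ z = s + w /\ Rabs w = Rabs (Rabs z - 1).
Proof.
destruct (Rle_dec 0 z) as [H|H].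
- exists 1, (z - 1); split; [left; reflexivity|split; [ring|]].
  rewrite (Rabs_right z); lra.
- exists (-1), (z + 1); split; [right; reflexivity|split; [ring|]].
  rewrite (Rabs_left z); last lra. replace (- z - 1) with (- (z + 1)) by ring.
  now rewrite Rabs_Ropp.
Qed.

Lemma absb x : - Rabs x <= x <= Rabs x.
Proof. split; [|apply Rle_abs]. pose proof (Rle_abs (-x)); rewrite Rabs_Ropp in H; lra. Qed.

Lemma four a a' b b' :
  Rabs ((a - a') * (b - b')) <=
  2 * (Rabs (Rabs (a + b) - 1) + Rabs (Rabs (a' + b') - 1) +
       Rabs (Rabs (a + b') - 1) + Rabs (Rabs (a' + b) - 1)) +
  Rabs (Rabs (a + b) - 1) * Rabs (Rabs (a' + b') - 1) +
  Rabs (Rabs (a + b') - 1) * Rabs (Rabs (a' + b) - 1).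
Proof.
destruct (sgn_dec (a + b)) as [s1 [w1 [S1 [E1 U1]]]].
destruct (sgn_dec (a' + b')) as [s2 [w2 [S2 [E2 U2]]]].
destruct (sgn_dec (a + b')) as [s3 [w3 [S3 [E3 U3]]]].
destruct (sgn_dec (a' + b)) as [s4 [w4 [S4 [E4 U4]]]].
rewrite -U1 -U2 -U3 -U4.
replace ((a - a') * (b - b')) with ((s3 + w3) * (s4 + w4) - (s1 + w1) * (s2 + w2))
  by (rewrite -E1 -E2 -E3 -E4; ring).
assert (L : s1 + w1 + (s2 + w2) = s3 + w3 + (s4 + w4)) by (rewrite -E1 -E2 -E3 -E4; ring).
rewrite -!Rabs_mult.
pose proof (absb w1); pose proof (absb w2); pose proof (absb w3); pose proof (absb w4).
pose proof (absb (w1 * w2)); pose proof (absb (w3 * w4)).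
apply Rabs_le.
destruct S1, S2, S3, S4; subst s1 s2 s3 s4; nra.
Qed.

Lemma cs6 x1 x2 x3 x4 x5 x6 :
  (x1 + x2 + x3 + x4 + x5 + x6) ^ 2 <=
  6 * (x1^2 + x2^2 + x3^2 + x4^2 + x5^2 + x6^2).
Proof.
assert (H : 6 * (x1^2 + x2^2 + x3^2 + x4^2 + x5^2 + x6^2) - (x1 + x2 + x3 + x4 + x5 + x6) ^ 2
  = (x1-x2)^2 + (x1-x3)^2 + (x1-x4)^2 + (x1-x5)^2 + (x1-x6)^2 + (x2-x3)^2 + (x2-x4)^2
  + (x2-x5)^2 + (x2-x6)^2 + (x3-x4)^2 + (x3-x5)^2 + (x3-x6)^2 + (x4-x5)^2 + (x4-x6)^2
  + (x5-x6)^2) by ring.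
assert (forall y, 0 <= y ^ 2) by (intro; apply pow2_ge_0).
pose proof (H0 (x1-x2)); pose proof (H0 (x1-x3)); pose proof (H0 (x1-x4)); pose proof (H0 (x1-x5));
pose proof (H0 (x1-x6)); pose proof (H0 (x2-x3)); pose proof (H0 (x2-x4)); pose proof (H0 (x2-x5));
pose proof (H0 (x2-x6)); pose proof (H0 (x3-x4)); pose proof (H0 (x3-x5)); pose proof (H0 (x3-x6));
pose proof (H0 (x4-x5)); pose proof (H0 (x4-x6)); pose proof (H0 (x5-x6)).
lra.
Qed.

Lemma four_sq a a' b b' :
  ((a - a') * (b - b')) ^ 2 <=
  24 * ((Rabs (a + b) - 1) ^ 2 + (Rabs (a' + b') - 1) ^ 2 +
        (Rabs (a + b') - 1) ^ 2 + (Rabs (a' + b) - 1) ^ 2 +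
        (Rabs (a + b) - 1) ^ 2 * (Rabs (a' + b') - 1) ^ 2 +
        (Rabs (a + b') - 1) ^ 2 * (Rabs (a' + b) - 1) ^ 2).
Proof.
pose proof (four a a' b b') as H.
rewrite -(pow2_abs (Rabs (a + b) - 1)) -(pow2_abs (Rabs (a' + b') - 1))
  -(pow2_abs (Rabs (a + b') - 1)) -(pow2_abs (Rabs (a' + b) - 1)).
rewrite -(pow2_abs ((a - a') * (b - b'))).
set (u1 := Rabs (Rabs (a + b) - 1)) in *.
set (u2 := Rabs (Rabs (a' + b') - 1)) in *.
set (u3 := Rabs (Rabs (a + b') - 1)) in *.
set (u4 := Rabs (Rabs (a' + b) - 1)) in *.
set (P := Rabs ((a - a') * (b - b'))) in *.
assert (0 <= P) by apply Rabs_pos.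
assert (0 <= u1) by apply Rabs_pos. assert (0 <= u2) by apply Rabs_pos.
assert (0 <= u3) by apply Rabs_pos. assert (0 <= u4) by apply Rabs_pos.
pose proof (cs6 (2*u1) (2*u2) (2*u3) (2*u4) (u1*u2) (u3*u4)).
assert (P ^ 2 <= (2 * (u1 + u2 + u3 + u4) + u1 * u2 + u3 * u4) ^ 2).
{ apply pow_incr; lra. }
replace (2 * u1 + 2 * u2 + 2 * u3 + 2 * u4 + u1 * u2 + u3 * u4) with
  (2 * (u1 + u2 + u3 + u4) + u1 * u2 + u3 * u4) in H5 by ring.
nra.
Qed.

Lemma abs_tri x y : Rabs (Rabs x - 1) <= Rabs (Rabs y - 1) + Rabs (x - y).
Proof.
unfold Rabs; repeat destruct Rcase_abs; lra.
Qed.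

Lemma sum_center (U : finType) (T : {set U}) (A : U -> R) :
  0 < INR #|T| ->
  rsum (fun x => x \in T) (fun s => A s - rsum (fun x => x \in T) A / INR #|T|) = 0.
Proof.
move=> HN.
rewrite (rsum_ext (G := fun s => A s + (- (rsum (fun x => x \in T) A / INR #|T|)))) //.
rewrite rsumD rsum_const; field; lra.
Qed.

Lemma varid (U : finType) (T : {set U}) (A : U -> R) :
  0 < INR #|T| ->
  let m := rsum (fun x => x \in T) A / INR #|T| in
  rsum (fun x => x \in T) (fun p => rsum (fun x => x \in T) (fun s => (A p - A s) ^ 2)) =
  2 * INR #|T| * rsum (fun x => x \in T) (fun p => (A p - m) ^ 2).
Proof.
move=> HN m.
set V := rsum _ (fun p => (A p - m) ^ 2).
have Hc := sum_center A HN; rewrite -/m in Hc.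
transitivity (rsum (fun x => x \in T) (fun p => INR #|T| * (A p - m) ^ 2 + V)).
  apply: rsum_ext => p _.
  rewrite (rsum_ext (G := fun s => (A p - m) ^ 2 + ((-2 * (A p - m)) * (A s - m) + (A s - m) ^ 2))).
    by rewrite rsumD rsum_const rsumD rsumZ Hc; rewrite /V; ring.
  by move=> s _; ring.
by rewrite rsumD rsumZ rsum_const -/V; ring.
Qed.

Definition HLprop (U : finType) (T : {set U}) (A B : U -> R) :=
  forall Psi : R -> R -> R,
  rsum (fun x => x \in T) (fun p => rsum (fun x => x \in T) (fun s => Psi (A p) (B s))) =
  INR #|T| * rsum (fun x => x \in T) (fun p => Psi (A p) (B p)).

Lemma Dfactor (U : finType) (T : {set U}) (A B : U -> R) :
  HLprop T A B ->
  INR #|T| * (INR #|T| *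
  rsum (fun x => x \in T) (fun p => rsum (fun x => x \in T)
     (fun s => (A p - A s) ^ 2 * (B p - B s) ^ 2))) =
  rsum (fun x => x \in T) (fun p => rsum (fun x => x \in T) (fun s => (A p - A s) ^ 2)) *
  rsum (fun x => x \in T) (fun p => rsum (fun x => x \in T) (fun s => (B p - B s) ^ 2)).
Proof.
move=> HL.
set S := fun F : U -> R => rsum (fun x => x \in T) F.
have E1 : INR #|T| * S (fun p => S (fun s => (A p - A s) ^ 2 * (B p - B s) ^ 2)) =
   S (fun s => S (fun p => S (fun p' => (A p - A s) ^ 2 * (B p' - B s) ^ 2))).
  rewrite /S rsum_exch -rsumZ; apply: rsum_ext => s _.
  by rewrite (HL (fun a b => (a - A s) ^ 2 * (b - B s) ^ 2)).
rewrite E1.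
have E2 : S (fun s => S (fun p => S (fun p' => (A p - A s) ^ 2 * (B p' - B s) ^ 2))) =
   S (fun p => S (fun p' => S (fun s => (A p - A s) ^ 2 * (B p' - B s) ^ 2))).
  rewrite /S rsum_exch; apply: rsum_ext => p _; by rewrite rsum_exch.
rewrite E2.
have E3 : INR #|T| * S (fun p => S (fun p' => S (fun s => (A p - A s) ^ 2 * (B p' - B s) ^ 2))) =
  S (fun p => S (fun p' => S (fun s => S (fun s' => (A p - A s) ^ 2 * (B p' - B s') ^ 2)))).
  rewrite /S -rsumZ; apply: rsum_ext => p _; rewrite -rsumZ; apply: rsum_ext => p' _.
  by rewrite (HL (fun a b => (A p - a) ^ 2 * (B p' - b) ^ 2)).
rewrite E3 /S -rsumZr; apply: rsum_ext => p _.
rewrite rsum_exch -rsumZr; apply: rsum_ext => s _.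
rewrite -rsumZ; apply: rsum_ext => p' _; by rewrite -rsumZ.
Qed.

Lemma rsum2Z (U : finType) (P Q : pred U) c (F : U -> U -> R) :
  rsum P (fun p => rsum Q (fun s => c * F p s)) = c * rsum P (fun p => rsum Q (F p)).
Proof. rewrite -rsumZ; apply: rsum_ext => p _; exact: rsumZ. Qed.

Definition rr (z : R) := (Rabs z - 1) ^ 2.

Lemma Dupper (U : finType) (T : {set U}) (A B : U -> R) :
  HLprop T A B ->
  rsum (fun x => x \in T) (fun p => rsum (fun x => x \in T)
        (fun s => rr (A p + B s) * rr (A s + B p))) =
  rsum (fun x => x \in T) (fun p => rr (A p + B p)) *
  rsum (fun x => x \in T) (fun p => rr (A p + B p)) ->
  let R0 := rsum (fun x => x \in T) (fun p => rr (A p + B p)) in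
  rsum (fun x => x \in T) (fun p => rsum (fun x => x \in T)
     (fun s => (A p - A s) ^ 2 * (B p - B s) ^ 2)) <=
  24 * (4 * INR #|T| * R0 + 2 * R0 ^ 2).
Proof.
move=> HL HX R0.
set S := fun F : U -> R => rsum (fun x => x \in T) F.
apply: Rle_trans.
  apply: (rsum_le (G := fun p => S (fun s => 24 * (rr (A p + B p) + rr (A s + B s) +
     rr (A p + B s) + rr (A s + B p) + rr (A p + B p) * rr (A s + B s) +
     rr (A p + B s) * rr (A s + B p))))) => p _.
  apply: rsum_le => s _.
  rewrite -Rpow_mult_distr; exact: (four_sq (A p) (A s) (B p) (B s)).
apply: Req_le.
rewrite /S.
have H1 : S (fun p => S (fun s => rr (A p + B p))) = INR #|T| * R0.
  by rewrite /S -rsumZ; apply: rsum_ext => p _; rewrite rsum_const.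
have H2 : S (fun p => S (fun s => rr (A s + B s))) = INR #|T| * R0.
  by rewrite /S rsum_const.
have H3 : S (fun p => S (fun s => rr (A p + B s))) = INR #|T| * R0.
  by rewrite /S (HL (fun a b => rr (a + b))).
have H4 : S (fun p => S (fun s => rr (A s + B p))) = INR #|T| * R0.
  by rewrite /S rsum_exch (HL (fun a b => rr (a + b))).
have H5 : S (fun p => S (fun s => rr (A p + B p) * rr (A s + B s))) = R0 * R0.
  by rewrite /S -rsumZr; apply: rsum_ext => p _; rewrite rsumZ.
have H6 := HX; rewrite -/R0 in H6.
transitivity (S (fun p => S (fun s => 24 * rr (A p + B p)) + S (fun s => 24 * rr (A s + B s)) +
   S (fun s => 24 * rr (A p + B s)) + S (fun s => 24 * rr (A s + B p)) +
   S (fun s => 24 * (rr (A p + B p) * rr (A s + B s))) +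
   S (fun s => 24 * (rr (A p + B s) * rr (A s + B p))))).
  apply: rsum_ext => p _; rewrite /S -!rsumD; apply: rsum_ext => s _; ring.
rewrite /S !rsumD !rsum2Z.
rewrite /S in H1 H2 H3 H4 H5.
rewrite H1 H2 H3 H4 H5 H6; ring.
Qed.

Definition ind (b : bool) : R := if b then 1 else 0.

Lemma ind_ge0 b : 0 <= ind b. Proof. rewrite /ind; case: b; lra. Qed.

Lemma cnt_compl (U : finType) (T : {set U}) (P : pred U) :
  INR #|[set x in T | P x]| = INR #|T| - rsum (fun x => x \in T) (fun x => ind (~~ P x)).
Proof.
rewrite rsum_cnt -rsum_card.
have -> : rsum (fun x => x \in T) (fun _ => 1) =
  rsum (fun x => x \in T) (fun x => (if P x then 1 else 0) + ind (~~ P x)).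
  by apply: rsum_ext => x _; rewrite /ind; case: (P x) => /=; ring.
rewrite rsumD; ring.
Qed.

Lemma markov (U : finType) (T : {set U}) (P : pred U) (phi : U -> R) t :
  (forall x, x \in T -> 0 <= phi x) -> (forall x, x \in T -> P x -> t <= phi x) -> 0 <= t ->
  t * rsum (fun x => x \in T) (fun x => ind (P x)) <= rsum (fun x => x \in T) phi.
Proof.
move=> H0 H1 Ht; rewrite -rsumZ; apply: rsum_le => x Hx; rewrite /ind.
case E: (P x); [rewrite Rmult_1_r; exact: H1 | rewrite Rmult_0_r; exact: H0].
Qed.

Lemma pt1 x m C e : 0 < e -> Rabs (m - C) <= e -> ~ Rabs (x - C) <= 19 * e ->
  324 * e ^ 2 <= (x - m) ^ 2.
Proof.
move=> He Hm Hx; rewrite -(pow2_abs (x - m)).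
have : 18 * e <= Rabs (x - m).
  move: Hm Hx; rewrite /Rabs; repeat case: Rcase_abs; lra.
nra.
Qed.

Lemma pt3 z e : 0 < e -> ~ Rabs (Rabs z - 1) <= e -> e ^ 2 <= rr z.
Proof.
move=> He Hz; rewrite /rr -(pow2_abs (Rabs z - 1)); nra.
Qed.

Lemma core (U : finType) (T : {set U}) (A B : U -> R) e C :
  0 < INR #|T| -> 0 < e <= 1 ->
  Rabs (rsum (fun x => x \in T) A / INR #|T| - C) <= e ->
  rsum (fun x => x \in T) (fun p => rsum (fun x => x \in T) (fun s => (A p - A s) ^ 2))
    <= 12 * INR #|T| ^ 2 * e ^ 3 ->
  rsum (fun x => x \in T) (fun p => rr (A p + B p)) <= INR #|T| * e ^ 6 ->
  INR #|[set x in T | Rleb (Rabs (A x - C)) (19 * e)]| / INR #|T| >= 1 - 3 * e /\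
  INR #|[set x in T | Rleb (Rabs (Rabs (B x + C) - 1)) (24 * e)]| / INR #|T| >= 1 - 4 * e.
Proof.
move=> HN He Hm HSA HR.
set N := INR #|T| in HN Hm HSA HR *.
set m := rsum (fun x => x \in T) A / N in Hm.
have HV : rsum (fun x => x \in T) (fun p => (A p - m) ^ 2) <= 6 * N * e ^ 3.
  have := varid A HN; rewrite -/N -/m => E; rewrite E in HSA.
  have : 0 < N ^ 2 * e ^ 3 by apply: Rmult_lt_0_compat; apply: pow_lt; lra.
  nra.
set b1 := rsum (fun x => x \in T) (fun x => ind (~~ Rleb (Rabs (A x - C)) (19 * e))).
set b3 := rsum (fun x => x \in T) (fun x => ind (~~ Rleb (Rabs (Rabs (A x + B x) - 1)) e)).
set b2 := rsum (fun x => x \in T) (fun x => ind (~~ Rleb (Rabs (Rabs (B x + C) - 1)) (24 * e))).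
have Hb1 : 324 * e ^ 2 * b1 <= 6 * N * e ^ 3.
  apply: Rle_trans HV; apply: markov.
  - move=> x _; exact: pow2_ge_0.
  - move=> x _ /negP Hx; apply: pt1 (proj1 He) Hm _ => /RlebP H; exact: Hx H.
  - have := pow_lt e 2 (proj1 He); lra.
have Hb3 : e ^ 2 * b3 <= N * e ^ 6.
  apply: Rle_trans HR; apply: markov.
  - move=> x _; exact: pow2_ge_0.
  - move=> x _ /negP Hx; apply: pt3 (proj1 He) _ => /RlebP H; exact: Hx H.
  - have := pow_lt e 2 (proj1 He); lra.
have Hb2 : b2 <= b1 + b3.
  rewrite /b1 /b3 /b2 -rsumD; apply: rsum_le => x _.
  rewrite /ind; case: (boolP (Rleb (Rabs (Rabs (B x + C) - 1)) (24 * e))) => /= H2.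
    case: (Rleb _ _); case: (Rleb _ _) => /=; lra.
  case: (boolP (Rleb (Rabs (A x - C)) (19 * e))) => /= H1; last first.
    case: (Rleb _ _) => /=; lra.
  case: (boolP (Rleb (Rabs (Rabs (A x + B x) - 1)) e)) => /= H3; last lra.
  exfalso; move/negP: H2; apply; apply/RlebP.
  move/RlebP: H1; move/RlebP: H3 => H3 H1.
  have := abs_tri (B x + C) (A x + B x).
  have -> : B x + C - (A x + B x) = - (A x - C) by ring.
  rewrite Rabs_Ropp; lra.
have b1ge : 0 <= b1 by apply: rsum_ge0 => x _; exact: ind_ge0.
have b3ge : 0 <= b3 by apply: rsum_ge0 => x _; exact: ind_ge0.
have He2 : 0 < e ^ 2 by apply: pow_lt; lra.
have Hb1' : b1 <= N * e / 54.
  have : e ^ 3 = e ^ 2 * e by ring.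
  move=> E; rewrite E in Hb1; nra.
have Hb3' : b3 <= N * e ^ 4.
  have : e ^ 6 = e ^ 2 * e ^ 4 by ring.
  move=> E; rewrite E in Hb3; nra.
have He4 : e ^ 4 <= e.
  have : e ^ 4 = e * e ^ 3 by ring.
  have : e ^ 3 <= 1 by rewrite -(pow1 3); apply: pow_incr; lra.
  move=> ? ->; nra.
split.
- rewrite cnt_compl -/N -/b1; apply: Rle_ge.
  apply: (Rmult_le_reg_r N) => //; rewrite /Rdiv Rmult_assoc Rinv_l; lra.
- rewrite cnt_compl -/N -/b2; apply: Rle_ge.
  apply: (Rmult_le_reg_r N) => //; rewrite /Rdiv Rmult_assoc Rinv_l; nra.
Qed.

Lemma abs_main (U : finType) (T : {set U}) (A B : U -> R) e C :
  0 < INR #|T| -> 0 < e <= 1 -> HLprop T A B ->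
  rsum (fun x => x \in T) (fun p => rsum (fun x => x \in T)
        (fun s => rr (A p + B s) * rr (A s + B p))) =
  rsum (fun x => x \in T) (fun p => rr (A p + B p)) *
  rsum (fun x => x \in T) (fun p => rr (A p + B p)) ->
  Rabs (rsum (fun x => x \in T) A / INR #|T| - C) <= e ->
  Rabs (rsum (fun x => x \in T) B / INR #|T| - C) <= e ->
  rsum (fun x => x \in T) (fun p => rr (A p + B p)) <= INR #|T| * e ^ 6 ->
  (INR #|[set x in T | Rleb (Rabs (A x - C)) (19 * e)]| / INR #|T| >= 1 - 3 * e /\
   INR #|[set x in T | Rleb (Rabs (Rabs (B x + C) - 1)) (24 * e)]| / INR #|T| >= 1 - 4 * e) \/
  (INR #|[set x in T | Rleb (Rabs (B x - C)) (19 * e)]| / INR #|T| >= 1 - 3 * e /\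
   INR #|[set x in T | Rleb (Rabs (Rabs (A x + C) - 1)) (24 * e)]| / INR #|T| >= 1 - 4 * e).
Proof.
move=> HN He HL HX HmA HmB HR.
set N := INR #|T| in HN HmA HmB HR *.
set R0 := rsum (fun x => x \in T) (fun p => rr (A p + B p)) in HX HR.
set SA := rsum (fun x => x \in T) (fun p => rsum (fun x => x \in T) (fun s => (A p - A s) ^ 2)).
set SB := rsum (fun x => x \in T) (fun p => rsum (fun x => x \in T) (fun s => (B p - B s) ^ 2)).
have HF := Dfactor HL; rewrite -/N -/SA -/SB in HF.
have HU := Dupper HL HX; rewrite -/N -/R0 in HU.
set D := rsum _ _ in HF HU.
have SAge : 0 <= SA by apply: rsum_ge0 => p _; apply: rsum_ge0 => s _; exact: pow2_ge_0.
have SBge : 0 <= SB by apply: rsum_ge0 => p _; apply: rsum_ge0 => s _; exact: pow2_ge_0.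
have R0ge : 0 <= R0 by apply: rsum_ge0 => p _; exact: pow2_ge_0.
have He6 : e ^ 6 <= 1 by rewrite -(pow1 6); apply: pow_incr; lra.
have He3 : 0 < e ^ 3 by apply: pow_lt; lra.
have HD : D <= 144 * N ^ 2 * e ^ 6.
  apply: Rle_trans HU _.
  have : R0 ^ 2 <= (N * e ^ 6) ^ 2 by apply: pow_incr; lra.
  have : 0 < N * e ^ 6 by apply: Rmult_lt_0_compat => //; apply: pow_lt; lra.
  nra.
have HP : SA * SB <= (12 * N ^ 2 * e ^ 3) ^ 2.
  rewrite -HF.
  have -> : (12 * N ^ 2 * e ^ 3) ^ 2 = N * (N * (144 * N ^ 2 * e ^ 6)) by ring.
  apply: Rmult_le_compat_l; first lra.
  apply: Rmult_le_compat_l; lra.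
have Hpos : 0 < 12 * N ^ 2 * e ^ 3.
  by apply: Rmult_lt_0_compat => //; apply: Rmult_lt_0_compat; [lra | apply: pow_lt].
case: (Rle_dec SA (12 * N ^ 2 * e ^ 3)) => HSA.
  left; exact: core HN He HmA HSA HR.
right.
have HSB : SB <= 12 * N ^ 2 * e ^ 3 by nra.
apply: core HN He HmB HSB _.
rewrite (rsum_ext (G := fun p => rr (A p + B p))) //.
by move=> x _; rewrite Rplus_comm.
Qed.

Lemma Rpower_k eps k : 0 < eps -> Rpower eps (INR k / 7) = (Rpower eps (1/7)) ^ k.
Proof.
move=> H; rewrite -Rpower_pow; last by rewrite /Rpower; apply: exp_pos.
rewrite Rpower_mult; f_equal; field.
Qed.

Theorem lemma2p7 :
  exists c0 : R, 0 < c0 /\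
  forall (n : nat), is_true (leq 2 n) ->
  forall (F : {set Sn n}),
  0 < dens F < 1 ->
  forall f1 : Sn n -> R, is_proj_U1 (fF F) f1 ->
  0 < ESn (fun pi => (fF F pi - f1 pi) ^ 2) <=
      c0 * (Rmin (dens F) (1 - dens F)) ^ 7 ->
  forall X Y : {set 'I_n},
  typical F (ESn (fun pi => (fF F pi - f1 pi) ^ 2)) X Y ->
  let e := Rpower (ESn (fun pi => (fF F pi - f1 pi) ^ 2)) (1/7) in
  let C := dens F - 1/2 in
  (almost_close X Y (g1 F X) C (3 * e) (19 * e) /\
   almost_boolean X Y (fun pi => g2 F X pi + C) (4 * e) (24 * e))
  \/
  (almost_close X Y (g2 F X) C (3 * e) (19 * e) /\
   almost_boolean X Y (fun pi => g1 F X pi + C) (4 * e) (24 * e)).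
Proof.
exists (1/2); split; first lra.
move=> n _ F Hc f1 _ Heps X Y Htyp e C.
subst e C.
set eps := ESn _ in Heps Htyp *.
set e := Rpower eps (1/7).
set C := dens F - 1/2.
have Heta : 0 < Rmin (dens F) (1 - dens F) <= 1.
  unfold Rmin; destruct (Rle_dec (dens F) (1 - dens F)); lra.
have Heta7 : Rmin (dens F) (1 - dens F) ^ 7 <= 1.
  have := pow_incr (Rmin (dens F) (1 - dens F)) 1 7 (conj (Rlt_le _ _ (proj1 Heta)) (proj2 Heta)).
  by rewrite pow1.
have Heps1 : eps <= 1/2 by nra.
have He0 : 0 < e by rewrite /e /Rpower; apply: exp_pos.
have He7 : e ^ 7 = eps.
  rewrite /e -(@Rpower_k _ 7 (proj1 Heps)).
  have -> : INR 7 / 7 = 1 by simpl; field.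
  by rewrite Rpower_1; lra.
have He1 : e < 1.
  case: (Rlt_dec e 1) => // H; have := pow_R1_Rle e 7; lra.
have He4 : Rpower eps (4/7) = e ^ 4.
  rewrite /e -(@Rpower_k _ 4 (proj1 Heps)); f_equal; simpl; field.
have He6 : Rpower eps (6/7) = e ^ 6.
  rewrite /e -(@Rpower_k _ 6 (proj1 Heps)); f_equal; simpl; field.
have He4l : e ^ 4 < 1.
  have : e ^ 4 = e * e ^ 3 by ring.
  have : e ^ 3 <= 1 by rewrite -(pow1 3); apply: pow_incr; lra.
  move=> ? ->; nra.
case: Htyp => _ [Hab [Hm1 [Hm2 Hsq]]].
rewrite -/e He4 in Hab; rewrite -/e in Hm1 Hm2; rewrite He6 in Hsq.
have HN : 0 < INR #|TXY X Y|.
  case: (pos_INR #|TXY X Y|) => // H0.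
  move: Hab; rewrite /almost_boolean /PrT -H0 /Rdiv Rinv_0 Rmult_0_r; lra.
have HR : rsum (fun x => x \in TXY X Y) (fun p => rr (g1 F X p + g2 F X p))
    <= INR #|TXY X Y| * e ^ 6.
  move: Hsq; rewrite /ET /gg /rr => H.
  set S := rsum _ _ in H *.
  have : S = S / INR #|TXY X Y| * INR #|TXY X Y| by field; lra.
  nra.
have := abs_main (A := g1 F X) (B := g2 F X) (C := C) HN (conj He0 (Rlt_le _ _ He1))
   (@sum_indep n F X Y) (sum_cross F X Y rr) Hm1 Hm2 HR.
by [].
Qed.
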